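(* $C_3(22) = 9$.
   Context: For positive integers $m, r$, $C_m(r)$ is the minimum odd positive integer $n$ such that there exist vectors $v_1, \ldots, v_n \in \mathbb{Z}^m$ (not necessarily distinct) with $|v_i| = \sqrt{r}$ (Euclidean norm) for every $i$ and $v_1 + \cdots + v_n = \mathbf{0}$; if no such odd $n$ exists, $C_m(r) = 0$. *)

(* Defs.v *)
From mathcomp Require Import all_boot all_algebra.
Set Implicit Arguments. Unset Strict Implicit. Unset Printing Implicit Defensive.
Import GRing.Theory Num.Theory.
Local Open Scope ring_scope.

Definition sqnorm (m : nat) (v : 'rV[int]_m) : int := \sum_(j < m) v 0 j ^+ 2.

Definition admissible (m r n : nat) : Prop :=
  exists v : 'I_n -> 'rV[int]_m,
    (forall i, sqnorm (v i) = r%:Z) /\ \sum_(i < n) v i = 0.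

Definition C_is (m r c : nat) : Prop :=
  (c = 0%N /\ forall n, odd n -> ~ admissible m r n) \/
  (odd c /\ admissible m r c /\ forall n, odd n -> (n < c)%N -> ~ admissible m r n).

(* Main.v *)
Require Import Defs.
From mathcomp Require Import all_boot all_algebra zify ring.
Set Implicit Arguments. Unset Strict Implicit. Unset Printing Implicit Defensive.
Import GRing.Theory Num.Theory.
Local Open Scope ring_scope.

Definition S4 : seq int := [:: 2; -2; 3; -3].
Definition R9 : seq int := [:: -4; -3; -2; -1; 0; 1; 2; 3; 4].
Definition P3 (a b c : int) : bool :=
  [&& a \in S4, b \in S4, c \in S4 &
     ((a^+2 == 4) + (b^+2 == 4) + (c^+2 == 4) == 1)%N].

Lemma bnd (a b c : int) : a^+2 + b^+2 + c^+2 = 22 -> a \in R9.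
Proof.
rewrite !expr2 => H.
have : -4 <= a <= 4 by apply/andP; split; nia.
move=> /andP [h1 h2].
have : (a = -4 \/ a = -3 \/ a = -2 \/ a = -1 \/ a = 0 \/ a = 1 \/ a = 2 \/ a = 3 \/ a = 4) by lia.
by case=> [->|[->|[->|[->|[->|[->|[->|[->|->]]]]]]]].
Qed.

Lemma chk : all (fun a => all (fun b => all (fun c =>
   (a^+2 + b^+2 + c^+2 != 22) || P3 a b c) R9) R9) R9.
Proof. by vm_compute. Qed.

Lemma sq22 (a b c : int) : a^+2 + b^+2 + c^+2 = 22 -> P3 a b c.
Proof.
move=> H.
have ha := bnd H.
have hb : b \in R9 by apply: (@bnd b c a); rewrite -H; ring.
have hc : c \in R9 by apply: (@bnd c a b); rewrite -H; ring.
move: chk => /allP /(_ a ha) /allP /(_ b hb) /allP /(_ c hc).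
by rewrite H eqxx.
Qed.

Lemma decomp (s : seq int) : all (mem S4) s ->
  exists P M A B : nat, \sum_(x <- s) x = 2 * P%:Z - 2 * M%:Z + 3 * A%:Z - 3 * B%:Z
   /\ size s = (P + M + A + B)%N /\ (\sum_(x <- s) (x^+2 == 4 : nat) = P + M)%N.
Proof.
elim: s => [|x s IH] /=.
  by move=> _; exists 0%N, 0%N, 0%N, 0%N; rewrite !big_nil.
move=> /andP [hx /IH [P [M [A [B [h1 [h2 h3]]]]]]].
rewrite !big_cons h1 h3.
move: hx; rewrite !inE => /orP [/eqP ->|/orP [/eqP ->|/orP [/eqP ->|/eqP ->]]].
- by exists P.+1, M, A, B; split; [|split]; rewrite /=; lia.
- by exists P, M.+1, A, B; split; [|split]; rewrite /=; lia.
- by exists P, M, A.+1, B; split; [|split]; rewrite /=; lia.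
- by exists P, M, A, B.+1; split; [|split]; rewrite /=; lia.
Qed.
Definition L : seq (seq int) := [:: [:: -3; -3; -2]; [:: -3; -3; -2]; [:: -3; -3; -2];
  [:: -3; 2; -3]; [:: 2; -3; -3]; [:: 2; 3; 3]; [:: 2; 3; 3]; [:: 3; 2; 3]; [:: 3; 2; 3]].
Definition vv (i : 'I_9) : 'rV[int]_3 := \row_(j < 3) nth 0 (nth [::] L i) j.

Lemma adm9 : admissible 3 22 9.
Proof.
exists vv; split.
  move=> i; rewrite /sqnorm !big_ord_recr big_ord0 /= !mxE.
  by case: i => [[|[|[|[|[|[|[|[|[|]]]]]]]]] ].
apply/rowP => j; rewrite summxE !big_ord_recr big_ord0 /= !mxE.
by case: j => [[|[|[|]]] ].
Qed.
Lemma lower n : odd n -> admissible 3 22 n -> (9 <= n)%N.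
Proof.
move=> hodd [v [hn hs]].
have hP : forall i, P3 (v i 0 ord0) (v i 0 (lift ord0 ord0)) (v i 0 (lift ord0 (lift ord0 ord0))).
  move=> i; apply: sq22; move: (hn i); rewrite /sqnorm !big_ord_recl big_ord0 addr0 addrA.
  done.
have hS : forall i j, v i 0 j \in S4.
  move=> i j; case/and4P: (hP i) => h0 h1 h2 _.
  case: j => [[|[|[|]]] hj] //.
  - by rewrite (_ : Ordinal hj = ord0) //; apply/val_inj.
  - by rewrite (_ : Ordinal hj = lift ord0 ord0) //; apply/val_inj.
  - by rewrite (_ : Ordinal hj = lift ord0 (lift ord0 ord0)) //; apply/val_inj.
pose a j := \sum_(i < n) ((v i 0 j ^+ 2 == 4) : nat).
have tot : (\sum_(j < 3) a j = n)%N.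
  rewrite /a exchange_big /= -[n in RHS]card_ord -sum1_card.
  apply: eq_bigr => i _; rewrite !big_ord_recl big_ord0 addn0 addnA.
  by case/and4P: (hP i) => _ _ _ /eqP.
have ge3 : forall j, (3 <= a j)%N.
  move=> j.
  have : all (mem S4) (map (fun i => v i 0 j) (index_enum 'I_n)).
    by apply/allP => x /mapP [i _ ->]; apply: hS.
  case/decomp => P [M [A [B [h1 [h2 h3]]]]].
  rewrite big_map in h1; rewrite big_map in h3.
  rewrite size_map in h2.
  have hz : \sum_(i < n) v i 0 j = 0.
    by move: (congr1 (fun w : 'rV[int]_3 => w 0 j) hs); rewrite /= summxE mxE.
  rewrite /a h3.
  have hn' : size (index_enum 'I_n) = n by rewrite -[RHS]card_ord cardT enumT /index_enum locked_withE.
  rewrite hn' in h2.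
  move: hz; rewrite h1 => hz.
  move: (odd_double_half n); rewrite hodd -muln2 => hd.
  lia.
rewrite -tot !big_ord_recl big_ord0.
have := ge3 ord0; have := ge3 (lift ord0 ord0); have := ge3 (lift ord0 (lift ord0 ord0)).
lia.
Qed.

Theorem theorem4 : C_is 3 22 9.
Proof.
right; split; first by [].
split; first exact: adm9.
move=> n hodd hlt hadm.
have := lower hodd hadm.
by rewrite leqNgt hlt.
Qed.
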